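(* Let $b\ge 2$ be even, $n\ge 0$, and put $f_0=b^{b^n}+1$, $f_1=b^{b^{n+1}}+1$. Then $\mathrm{Ap}(SF(b,n),f_0)=\{0,f_1,2f_1,\dots,b^{b^n}f_1\}$, $F(SF(b,n)) = b^{b^n}f_1 - f_0 = b^{(b+1)b^{n}}-1$, and $g(SF(b,n))=\tfrac12\, b^{(b+1)b^{n}}$.
   Context: For an even integer $b\ge2$ and $n\ge0$, $SF(b,n)=\langle\{b^{b^{n+i}}+1:i\in\mathbb{N}\}\rangle$, the submonoid of $(\mathbb{N},+)$ generated by these numbers (a numerical semigroup). $\mathrm{Ap}(S,x)=\{s\in S:s-x\notin S\}$; $F(S)$ is the greatest integer not in $S$; the genus $g(S)$ is the cardinality of $\mathbb{N}\setminus S$. *)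

(* Defs.v *)
From mathcomp Require Import all_boot.
Set Implicit Arguments. Unset Strict Implicit. Unset Printing Implicit Defensive.

Inductive SF (b n : nat) : nat -> Prop :=
  | SF0 : SF b n 0
  | SFadd : forall (i s : nat), SF b n s -> SF b n (b ^ (b ^ (n + i)) + 1 + s).

(* Apery set Ap(S,x) = { s in S : s - x notin S } (integer subtraction:
   if s < x then s - x is negative, hence not in S). *)
Definition Apery (S : nat -> Prop) (x s : nat) : Prop :=
  S s /\ ~ (x <= s /\ S (s - x)).

Definition is_frobenius (S : nat -> Prop) (F : nat) : Prop :=
  ~ S F /\ (forall m, F < m -> S m).

Definition is_genus (S : nat -> Prop) (g : nat) : Prop :=
  exists l : seq nat, uniq l /\ (forall m, m \in l <-> ~ S m) /\ size l = g.

(* Main.v *)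
Require Import Defs.
From Stdlib Require Import ClassicalEpsilon.
From mathcomp Require Import all_boot zify.
Definition S2 (a c m : nat) := exists x y, m = x * a + y * c.

Section Two.
Variables a c : nat.
Hypothesis ha : 1 < a.
Hypothesis hc : 1 < c.
Hypothesis cop : coprime a c.

Lemma S2_add m1 m2 : S2 a c m1 -> S2 a c m2 -> S2 a c (m1 + m2).
Proof. move=> [x1 [y1 ->]] [x2 [y2 ->]]; exists (x1 + x2), (y1 + y2); lia. Qed.

Lemma S2_repr m k : m %% a = (k * c) %% a -> k * c <= m -> S2 a c m.
Proof.
move=> hm hk. have : a %| m - k * c by rewrite -eqn_mod_dvd // hm.
case/dvdnP=> j hj. exists j, k. lia.
Qed.

Lemma below m k : m %% a = (k * c) %% a -> m < k * c -> exists2 j, 0 < j & k * c - m = j * a.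
Proof.
move=> hm hk. have : a %| k * c - m by rewrite -eqn_mod_dvd ?hm //; lia.
case/dvdnP=> j hj. exists j => //. case: j hj => //= h. lia.
Qed.

Lemma inv_mod m : exists2 k, k < a & (k * c) %% a = m %% a.
Proof.
have [u hu hd] := Bezoutl c (ltnW ha).
move: cop hd; rewrite /coprime => /eqP -> /dvdnP [j hj].
exists (((a - u) * m) %% a); first by rewrite ltn_mod; lia.
rewrite modnMml.
have e : (a - u) * m * c + (m * j) * a = m + (m * c) * a.
  rewrite -[(m * j) * a]mulnA -hj mulnDr muln1 addnA.
  have : (a - u) * (m * c) + m * (u * c) = (m * c) * a.
    have -> : a = (a - u) + u by lia.
    rewrite addnK mulnDr. nia.
  lia.
have := congr1 (modn^~ a) e =>/=. by rewrite [X in X %% a = _]addnC [X in _ = X %% a]addnC !modnMDl.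
Qed.

Lemma S2_ge m k : S2 a c m -> k < a -> m %% a = (k * c) %% a -> k * c <= m.
Proof.
move=> [x [y ->]] hk hm. rewrite leqNgt; apply/negP => hlt.
have hy : y < k.
  rewrite ltnNge; apply/negP => hky. have : k * c <= y * c by rewrite leq_mul2r hky orbT. lia.
have : a %| (k - y) * c.
  rewrite mulnBl -eqn_mod_dvd; last by rewrite leq_mul2r ltnW ?orbT.
  by rewrite -hm modnMDl.
rewrite Gauss_dvdl // => /dvdn_leq. lia.
Qed.

Definition F := a * c - a - c.

Lemma F_eq : F + a = (a - 1) * c.
Proof. rewrite /F mulnBl mul1n. have : a + c <= a * c by nia. nia. Qed.

Lemma F_not : ~ S2 a c F.
Proof.
move=> hF. have := @S2_ge F (a - 1) hF.
have hm : F %% a = ((a - 1) * c) %% a by rewrite -F_eq modnDr.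
move=> /(_ ltac:(lia) hm). have := F_eq. lia.
Qed.

Lemma F_big m : F < m -> S2 a c m.
Proof.
move=> hm. have [k hk hkm] := inv_mod m.
case: (leqP (k * c) m) => hl; first exact: S2_repr (esym hkm) hl.
have [j hj e] := @below m k (esym hkm) hl.
have : k * c <= (a - 1) * c by rewrite leq_mul2r; apply/orP; right; lia.
have := F_eq. nia.
Qed.

Lemma sym1 m : m <= F -> S2 a c m -> ~ S2 a c (F - m).
Proof.
move=> hm h1 h2; apply: F_not. have := @S2_add _ _ h1 h2. by rewrite subnKC.
Qed.

Lemma sym2 m : ~ S2 a c m -> S2 a c (F - m).
Proof.
move=> hn.
have [k hk hkm] := inv_mod m.
case: (leqP (k * c) m) => hl.
  by exfalso; apply: hn; exact: S2_repr (esym hkm) hl.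
have [j hj e] := @below m k (esym hkm) hl.
exists (j - 1), (a - 1 - k).
have e2 : (a - 1 - k) * c + k * c = (a - 1) * c by rewrite -mulnDl subnK //; lia.
have := F_eq. nia.
Qed.

Lemma ap s : (S2 a c s /\ ~ (a <= s /\ S2 a c (s - a))) <-> exists2 k, k < a & s = k * c.
Proof.
split.
  move=> [[x [y ->]] hn].
  case: x hn => [|x] hn; last by exfalso; apply: hn; split; [nia | exists x, y; nia].
  case: (leqP a y) => hy.
    exfalso; apply: hn; split; first nia.
    exists (c - 1), (y - a).
    have e1 : (y - a) * c + a * c = y * c by rewrite -mulnDl subnK.
    nia.
  by exists y => //; rewrite mul0n add0n.
move=> [k hk ->]; split; first by exists 0, k; rewrite mul0n add0n.
move=> [hle hs].
have := @S2_ge (k * c - a) k hs hk.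
have -> : (k * c - a) %% a = (k * c) %% a.
  by rewrite -[in RHS](subnK hle) modnDr.
move=> /(_ erefl). lia.
Qed.

Definition pb m : bool :=
  if excluded_middle_informative (S2 a c m) then true else false.

Lemma pbP m : pb m <-> S2 a c m.
Proof. by rewrite /pb; case: excluded_middle_informative. Qed.

Lemma count_rev_iota (p : pred nat) n :
  count p (iota 0 n) = count (fun i => p (n - i.+1)) (iota 0 n).
Proof.
rewrite -!sum1_count.
have := big_nat_rev addn 0 0 n p (fun _ => 1).
rewrite /index_iota subn0 => ->. apply: eq_bigl => i. by rewrite add0n.
Qed.

Lemma genus : exists l : seq nat, uniq l /\ (forall m, m \in l <-> ~ S2 a c m) /\ 2 * size l = F + 1.
Proof.
exists (filter (predC pb) (iota 0 (F + 1))); split; first by rewrite filter_uniq // iota_uniq.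
split.
  move=> m; rewrite mem_filter mem_iota /= add0n; split.
    by move=> /andP [/negP h _] hs; apply: h; apply/pbP.
  move=> hn; apply/andP; split; first by apply/negP => /pbP.
  rewrite addn1 ltnS leqNgt; apply/negP => /F_big; exact: hn.
rewrite size_filter.
have e : count pb (iota 0 (F + 1)) = count (predC pb) (iota 0 (F + 1)).
  rewrite count_rev_iota; apply: eq_in_count => i; rewrite mem_iota add0n /= => hi.
  have -> : F + 1 - i.+1 = F - i by lia.
  have hiF : i <= F by lia.
  case: (boolP (pb i)) => h /=.
    apply/negbTE/negP => /pbP; apply: sym1 => //. exact/pbP.
  apply/pbP; apply: sym2 => /pbP; exact/negP.
have := count_predC pb (iota 0 (F + 1)). rewrite size_iota e. lia.
Qed.
End Two.

Section Spec.
Variables b n : nat.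
Hypothesis hb2 : 2 <= b.
Hypothesis hbe : ~~ odd b.

Let B := b ^ (b ^ n).
Let a := B + 1.
Let c := b ^ (b ^ n.+1) + 1.

Lemma B_ge : 2 <= B.
Proof.
rewrite /B. apply: leq_trans hb2 _. rewrite -{1}(expn1 b) leq_exp2l //; first by rewrite expn_gt0; lia.
Qed.

Lemma B_even : ~~ odd B.
Proof. by rewrite /B oddX negb_or hbe andbT -lt0n expn_gt0; lia. Qed.

Lemma gen_pow i : b ^ (b ^ (n + i)) = B ^ (b ^ i).
Proof. by rewrite /B expnD expnM. Qed.

Lemma B2e e : B ^ (2 * e) %% a = 1.
Proof.
have h2 : B ^ 2 %% a = 1.
  have -> : B ^ 2 = (B - 1) * a + 1.
    rewrite /a mulnDr muln1 mulnBl mul1n. have := B_ge. nia.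
  rewrite modnMDl modn_small //. rewrite /a. have := B_ge. lia.
rewrite expnM -modnXm h2 exp1n modn_small //. rewrite /a. have := B_ge. lia.
Qed.

Lemma even_pow i : 0 < i -> exists e, b ^ i = 2 * e.
Proof.
case: i => // i _. have /dvdnP [k hk] : 2 %| b by rewrite dvdn2.
exists (b ^ i * k). rewrite expnS {1}hk. lia.
Qed.

Lemma gen_mod i : 0 < i -> (b ^ (b ^ (n + i)) + 1) %% a = 2 %% a.
Proof.
move=> hi. have [e he] := even_pow i hi.
by rewrite gen_pow he -modnDml B2e.
Qed.

Lemma c_eq : c = b ^ (b ^ (n + 1)) + 1.
Proof. by rewrite [n + 1]addn1. Qed.

Lemma a_gt : 2 < a.
Proof. rewrite /a. have := B_ge. lia. Qed.

Lemma c_mod : c %% a = 2.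
Proof. rewrite c_eq gen_mod // modn_small //; exact: a_gt. Qed.

Lemma cop_ac : coprime a c.
Proof.
rewrite -coprime_modr c_mod coprimen2 /a addn1 /=. exact: B_even.
Qed.

Lemma c_gt : 1 < c.
Proof. rewrite /c addn1 ltnS expn_gt0. apply/orP; left. lia. Qed.

Lemma a_gt1 : 1 < a.
Proof. have := a_gt. lia. Qed.

Ltac side := first [exact: a_gt1 | exact: c_gt | exact: cop_ac].

Lemma SF_S2 m : SF b n m -> S2 a c m.
Proof.
elim=> [|i s _ IH]; first by exists 0, 0.
apply: S2_add; try side; last by [].
case: i => [|i].
  exists 1, 0. by rewrite mul1n mul0n !addn0.
apply: (@S2_repr a c _ _ _ _ 1); try side.
  by rewrite mul1n gen_mod // c_mod modn_small // a_gt.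
rewrite mul1n c_eq leq_add2r leq_exp2l; last by lia.
rewrite leq_exp2l; lia.
Qed.

Lemma S2_SF m : S2 a c m -> SF b n m.
Proof.
move=> [x [y ->]].
elim: x => [|x IH].
  rewrite mul0n add0n. elim: y => [|y IHy]; first by rewrite mul0n; exact: SF0.
  rewrite mulSn. have := SFadd 1 IHy. by rewrite [n + 1]addn1.
rewrite mulSn -addnA. have := SFadd 0 IH. by rewrite [n + 0]addn0.
Qed.

Lemma SF_iff m : SF b n m <-> S2 a c m.
Proof. split; [exact: SF_S2 | exact: S2_SF]. Qed.

End Spec.

From mathcomp Require Import all_boot.

Theorem mainTheorem20 (b n : nat) (hb2 : 2 <= b) (hbe : ~~ odd b) :
  let f0 := b ^ (b ^ n) + 1 in
  let f1 := b ^ (b ^ n.+1) + 1 in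
  (forall s, Apery (SF b n) f0 s <-> exists2 k, k <= b ^ (b ^ n) & s = k * f1)
  /\ is_frobenius (SF b n) (b ^ (b ^ n) * f1 - f0)
  /\ b ^ (b ^ n) * f1 - f0 = b ^ ((b + 1) * b ^ n) - 1
  /\ is_genus (SF b n) (b ^ ((b + 1) * b ^ n) %/ 2).
Proof.
move=> f0 f1.
have hiff := @SF_iff b n hb2 hbe.
have ha : 1 < f0 by have := @a_gt b n hb2 hbe; rewrite /f0; lia.
have hc : 1 < f1 := @c_gt b n hb2 hbe.
have cop : coprime f0 f1 := @cop_ac b n hb2 hbe.
set B := b ^ b ^ n in f0 f1 ha hc cop hiff *.
have hf1 : f1 = B ^ b + 1 by rewrite /f1 /B expnS mulnC expnM.
have hF : F f0 f1 = B * f1 - f0.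
  rewrite /F /f0 mulnDl mul1n. lia.
have hF2 : B * f1 - f0 = b ^ ((b + 1) * b ^ n) - 1.
  rewrite [(b + 1) * _]mulnC expnM -/B hf1 /f0 expnD expn1. nia.
split.
  move=> s; rewrite /Apery !hiff ap //.
  split; move=> [k hk ->]; exists k => //; rewrite /f0 in hk *; lia.
split.
  rewrite -hF; split; first by rewrite hiff; exact: F_not.
  by move=> m hm; rewrite hiff; exact: F_big.
split; first exact: hF2.
have [l [hu [hm hs]]] := @genus f0 f1 ha hc cop.
exists l; split => //; split; first by move=> m; rewrite hiff.
have -> : b ^ ((b + 1) * b ^ n) = 2 * size l.
  rewrite hs hF hF2 subnK //. by rewrite expn_gt0; apply/orP; left; lia.
by rewrite mulKn.
Qed.
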